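(* Let $G$ be a finite simple graph. If $G$ has two distinct min-max clique coverings that both satisfy simple intersection, then $G$ contains $\mathrm{circ}(6,\{1,2\})$ as an induced subgraph.
   Context: A clique covering of $G$ is a set of cliques (vertex sets inducing complete subgraphs) such that every edge of $G$ lies in at least one of them. $\operatorname{cc}(G)$ denotes the minimum size of a clique covering. A min-max clique covering is a clique covering of size $\operatorname{cc}(G)$ in which every clique is a maximal clique of $G$. A clique covering $\{C_1,\dots,C_\ell\}$ has simple intersection if $C_i\cap C_j\cap C_k=\emptyset$ for all distinct $i,j,k$. The circulant graph $\mathrm{circ}(6,\{1,2\})$ has vertex set $\{0,\dots,5\}$ with $i$ adjacent to $i\pm1$ and $i\pm2 \pmod 6$; equivalently its vertices are the $2$-subsets of $\{1,2,3,4\}$, two being adjacent iff they intersect. *)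

(* Defs.v *)
From mathcomp Require Import all_boot.
Set Implicit Arguments. Unset Strict Implicit. Unset Printing Implicit Defensive.

Definition simple_graph (T : finType) (e : rel T) : Prop :=
  symmetric e /\ irreflexive e.

Definition is_clique (T : finType) (e : rel T) (C : {set T}) : Prop :=
  forall x y, x \in C -> y \in C -> x != y -> e x y.

Definition is_maximal_clique (T : finType) (e : rel T) (C : {set T}) : Prop :=
  is_clique e C /\ forall D : {set T}, is_clique e D -> C \subset D -> D = C.

Definition is_clique_covering (T : finType) (e : rel T) (P : {set {set T}}) : Prop :=
  (forall C, C \in P -> is_clique e C) /\
  (forall x y, e x y -> exists2 C, C \in P & (x \in C) && (y \in C)).

Definition is_cc (T : finType) (e : rel T) (k : nat) : Prop :=
  (exists P, is_clique_covering e P /\ #|P| = k) /\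
  (forall P, is_clique_covering e P -> k <= #|P|).

Definition is_minmax_clique_covering (T : finType) (e : rel T) (P : {set {set T}}) : Prop :=
  is_clique_covering e P /\ is_cc e #|P| /\
  (forall C, C \in P -> is_maximal_clique e C).

Definition simple_intersection (T : finType) (P : {set {set T}}) : Prop :=
  forall Ci Cj Ck, Ci \in P -> Cj \in P -> Ck \in P ->
    Ci != Cj -> Ci != Ck -> Cj != Ck -> Ci :&: Cj :&: Ck = set0.

Definition circ612 (i j : 'I_6) : bool :=
  ((j + 6 - i) %% 6 \in [:: 1; 2; 4; 5]).

Definition contains_induced_circ612 (T : finType) (e : rel T) : Prop :=
  exists f : 'I_6 -> T, injective f /\ forall i j, e (f i) (f j) = circ612 i j.

(* Main.v *)
Require Import Defs.
From mathcomp Require Import all_boot.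

Section Helpers.
Variables (T : finType) (e : rel T).

Lemma at_most2 (P : {set {set T}}) x A B D :
  simple_intersection P -> A \in P -> B \in P -> D \in P -> A != B ->
  x \in A -> x \in B -> x \in D -> (D = A) \/ (D = B).
Proof.
move=> si AP BP DP AB xA xB xD.
case: (eqVneq D A) => [->|DA]; first by left.
case: (eqVneq D B) => [->|DB]; first by right.
have H : A :&: B :&: D = set0 by apply: si => //; rewrite eq_sym.
have : x \in A :&: B :&: D by rewrite !inE xA xB xD.
by rewrite H inE.
Qed.

Lemma max_ext C x : symmetric e -> is_maximal_clique e C -> x \notin C ->
  (forall c, c \in C -> e x c) -> False.
Proof.
move=> esym [Ccl Cmax] xC H.
have cl : is_clique e (x |: C).
  move=> y z; rewrite !inE => /orP[/eqP->|yC] /orP[/eqP->|zC] yz.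
  - by rewrite eqxx in yz.
  - exact: H.
  - by rewrite esym; apply: H.
  - exact: Ccl.
have E := Cmax _ cl (subsetUr _ _).
by move: xC; rewrite -E setU11.
Qed.

Lemma max_not_sub C D : is_clique e C -> is_maximal_clique e D -> D != C ->
  exists2 x, x \in D & x \notin C.
Proof.
move=> Ccl [Dcl Dmax] DC.
case: (boolP (D \subset C)) => [sub|/subsetPn [x xD xC]]; last by exists x.
by rewrite (Dmax C Ccl sub) eqxx in DC.
Qed.

End Helpers.
Arguments max_not_sub {T e C D}. Arguments max_ext {T e C x}. Arguments at_most2 {T P x A B D}.

Theorem mainTheorem1 (T : finType) (e : rel T) :
  simple_graph e ->
  forall P Q : {set {set T}},
    is_minmax_clique_covering e P -> simple_intersection P ->
    is_minmax_clique_covering e Q -> simple_intersection Q ->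
    P != Q ->
    contains_induced_circ612 e.
Proof.
move=> [esym eirr] P Q [[Pcl Pcov] [Pcc Pmax]] Psi [[Qcl Qcov] [Qcc Qmax]] Qsi PQ.
have [C CP CQ] : exists2 C, C \in P & C \notin Q.
  case: (boolP [exists C, (C \in P) && (C \notin Q)]) =>
      [/existsP [C /andP [? ?]]|/existsPn H]; first by exists C.
  have sub : P \subset Q by apply/subsetP => C CP; move: (H C); rewrite CP /= negbK.
  have le : #|Q| <= #|P| by apply: Qcc.2; split.
  by move: PQ; rewrite eqEcard sub le.
have Cmax := Pmax C CP; have Ccl := Cmax.1.
have [u [w [uC wC uw]]] : exists u w, [/\ u \in C, w \in C & u != w].
  case: (boolP [exists u, exists w, [&& u \in C, w \in C & u != w]]) =>
      [/existsP [u /existsP [w /and3P [? ? ?]]]|/existsPn H]; first by exists u, w.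
  have cov : is_clique_covering e (P :\ C).
    split; first by move=> C' /setD1P [_]; apply: Pcl.
    move=> x y exy; have [C' C'P /andP[xC' yC']] := Pcov x y exy.
    exists C'; last by rewrite xC' yC'.
    rewrite in_setD1 C'P andbT.
    apply/eqP => E; subst C'.
    move: (H x) => /existsPn /(_ y); rewrite xC' yC' /= negbK => /eqP xy.
    by subst y; rewrite eirr in exy.
  have := Pcc.2 _ cov; rewrite (cardsD1 C P) CP.
  by rewrite add1n ltnn.
have nin : forall y z, y \in C -> z \notin C -> y != z.
  by move=> y z yC zC; apply: contraNneq zC => <-.
have [D1 D1Q /andP[uD1 wD1]] := Qcov u w (Ccl u w uC wC uw).
have D1C : D1 != C by apply: contraNneq CQ => <-.
have [b bC bD1] := max_not_sub (Qcl D1 D1Q) Cmax ltac:(by rewrite eq_sym).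
have ub : u != b by apply: contraNneq bD1 => <-.
have [D2 D2Q /andP[uD2 bD2]] := Qcov u b (Ccl u b uC bC ub).
have D12 : D1 != D2 by apply: contraNneq bD1 => ->.
have CD12 : forall c, c \in C -> (c \in D1) || (c \in D2).
  move=> c cC; case: (eqVneq c u) => [->|cu]; first by rewrite uD1.
  have [D DQ /andP[uD cD]] := Qcov u c (Ccl u c uC cC ltac:(by rewrite eq_sym)).
  case: (at_most2 Qsi D1Q D2Q DQ D12 uD1 uD2 uD) => DE; move: cD; rewrite DE => ->.
  - by [].
  - by rewrite orbT.
have D2C : D2 != C by apply: contraNneq CQ => <-.
have [a aC aD2] := max_not_sub (Qcl D2 D2Q) Cmax ltac:(by rewrite eq_sym).
have aD1 : a \in D1 by move: (CD12 a aC); rewrite (negbTE aD2) orbF.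
have ab : a != b by apply: contraNneq aD2 => ->.
have [D3 D3Q /andP[aD3 bD3]] := Qcov a b (Ccl a b aC bC ab).
have D13 : D1 != D3 by apply: contraNneq bD1 => ->.
have D23 : D2 != D3 by apply: contraNneq aD2 => ->.
have D3C : D3 != C by apply: contraNneq CQ => <-.
have CD13 : forall c, c \in C -> (c \in D1) || (c \in D3).
  move=> c cC; case/orP: (CD12 c cC) => [->//|cD2].
  case: (boolP (c \in D1)) => [//|cD1].
  have ca : c != a by apply: contraNneq cD1 => ->.
  have [D DQ /andP[cD aD]] := Qcov c a (Ccl c a cC aC ca).
  case: (at_most2 Qsi D1Q D3Q DQ D13 aD1 aD3 aD) => DE; move: cD; rewrite DE.
  - by rewrite (negbTE cD1).
  - by move=> ->; rewrite orbT.
have CD23 : forall c, c \in C -> (c \in D2) || (c \in D3).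
  move=> c cC; case/orP: (CD12 c cC) => [cD1|->//].
  case: (boolP (c \in D2)) => [//|cD2].
  have cb : c != b by apply: contraNneq cD2 => ->.
  have [D DQ /andP[cD bD]] := Qcov c b (Ccl c b cC bC cb).
  case: (at_most2 Qsi D2Q D3Q DQ D23 bD2 bD3 bD) => DE; move: cD; rewrite DE.
  - by rewrite (negbTE cD2).
  - by move=> ->; rewrite orbT.
have out : forall x Di Dj, x \notin C -> Di \in Q -> Dj \in Q -> x \in Di -> x \in Dj ->
    (forall c, c \in C -> (c \in Di) || (c \in Dj)) -> False.
  move=> x Di Dj xC DiQ DjQ xi xj cov.
  apply: (max_ext esym Cmax xC) => c cC.
  have cx : x != c by rewrite eq_sym; apply: nin.
  case/orP: (cov c cC) => cD; first exact: (Qcl Di DiQ x c xi cD cx).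
  exact: (Qcl Dj DjQ x c xj cD cx).
have [x1 x1D1 x1C] := max_not_sub Ccl (Qmax D1 D1Q) D1C.
have [x2 x2D2 x2C] := max_not_sub Ccl (Qmax D2 D2Q) D2C.
have [x3 x3D3 x3C] := max_not_sub Ccl (Qmax D3 D3Q) D3C.
have x12 : x1 != x2.
  apply/negP => /eqP E; apply: (out x2 D1 D2 x2C D1Q D2Q _ x2D2 CD12); by rewrite -E.
have x13 : x1 != x3.
  apply/negP => /eqP E; apply: (out x3 D1 D3 x3C D1Q D3Q _ x3D3 CD13); by rewrite -E.
have x23 : x2 != x3.
  apply/negP => /eqP E; apply: (out x3 D2 D3 x3C D2Q D3Q _ x3D3 CD23); by rewrite -E.
have pside : forall y xi xj, y \in C -> xi \notin C -> xj \notin C -> xi != xj ->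
    e y xi -> e y xj -> e xi xj.
  move=> y xi xj yC xiC xjC ne eyi eyj.
  have [E1 E1P /andP[yE1 xiE1]] := Pcov y xi eyi.
  have [E2 E2P /andP[yE2 xjE2]] := Pcov y xj eyj.
  have E1C : C != E1 by rewrite eq_sym; apply: contraNneq xiC => <-.
  case: (at_most2 Psi CP E1P E2P E1C yC yE1 yE2) => E21.
  - by move: xjC; rewrite -E21 xjE2.
  - by apply: (Pcl E1 E1P xi xj xiE1 _ ne); rewrite -E21.
have adj : forall y z D, D \in Q -> y \in C -> z \notin C -> y \in D -> z \in D -> e y z.
  move=> y z D DQ yC zC yD zD; exact: (Qcl D DQ y z yD zD (nin y z yC zC)).
have ua : u != a by apply: contraNneq aD2 => <-.
have Eua : e u a by apply: (Qcl D1 D1Q).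
have Eub : e u b by apply: (Qcl D2 D2Q).
have Eab : e a b by apply: (Qcl D3 D3Q).
have Eux1 : e u x1 by apply: (adj _ _ D1).
have Eux2 : e u x2 by apply: (adj _ _ D2).
have Eax1 : e a x1 by apply: (adj _ _ D1).
have Eax3 : e a x3 by apply: (adj _ _ D3).
have Ebx2 : e b x2 by apply: (adj _ _ D2).
have Ebx3 : e b x3 by apply: (adj _ _ D3).
have Ex12 : e x1 x2 by apply: (pside u).
have Ex13 : e x1 x3 by apply: (pside a).
have Ex23 : e x2 x3 by apply: (pside b).
have Nux3 : e u x3 = false.
  apply/negbTE/negP => ex; have [D DQ /andP[uD xD]] := Qcov u x3 ex.
  case: (at_most2 Qsi D1Q D2Q DQ D12 uD1 uD2 uD) => DE; rewrite DE in xD.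
  - exact: (out x3 D1 D3 x3C D1Q D3Q xD x3D3 CD13).
  - exact: (out x3 D2 D3 x3C D2Q D3Q xD x3D3 CD23).
have Nax2 : e a x2 = false.
  apply/negbTE/negP => ex; have [D DQ /andP[aD xD]] := Qcov a x2 ex.
  case: (at_most2 Qsi D1Q D3Q DQ D13 aD1 aD3 aD) => DE; rewrite DE in xD.
  - exact: (out x2 D1 D2 x2C D1Q D2Q xD x2D2 CD12).
  - exact: (out x2 D2 D3 x2C D2Q D3Q x2D2 xD CD23).
have Nbx1 : e b x1 = false.
  apply/negbTE/negP => ex; have [D DQ /andP[bD xD]] := Qcov b x1 ex.
  case: (at_most2 Qsi D2Q D3Q DQ D23 bD2 bD3 bD) => DE; rewrite DE in xD.
  - exact: (out x1 D1 D2 x1C D1Q D2Q x1D1 xD CD12).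
  - exact: (out x1 D1 D3 x1C D1Q D3Q x1D1 xD CD13).
have ux1 := nin _ _ uC x1C; have ux2 := nin _ _ uC x2C; have ux3 := nin _ _ uC x3C.
have ax1 := nin _ _ aC x1C; have ax2 := nin _ _ aC x2C; have ax3 := nin _ _ aC x3C.
have bx1 := nin _ _ bC x1C; have bx2 := nin _ _ bC x2C; have bx3 := nin _ _ bC x3C.
exists (fun i : 'I_6 => nth u [:: u; a; b; x3; x2; x1] i); split.
  move=> i j E; apply/eqP.
  case: i E => [[|[|[|[|[|[|i]]]]]] //= Hi];
  case: j => [[|[|[|[|[|[|j]]]]]] //= Hj] E;
  try (by []); move/eqP: E;
  by rewrite ?(negbTE ub, negbTE ab, negbTE ua, negbTE x12, negbTE x13, negbTE x23,
    negbTE ux1, negbTE ux2, negbTE ux3, negbTE ax1, negbTE ax2, negbTE ax3,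
    negbTE bx1, negbTE bx2, negbTE bx3) // eq_sym
    ?(negbTE ub, negbTE ab, negbTE ua, negbTE x12, negbTE x13, negbTE x23,
    negbTE ux1, negbTE ux2, negbTE ux3, negbTE ax1, negbTE ax2, negbTE ax3,
    negbTE bx1, negbTE bx2, negbTE bx3).
move=> i j.
case: i => [[|[|[|[|[|[|i]]]]]] //= Hi];
case: j => [[|[|[|[|[|[|j]]]]]] //= Hj];
rewrite ?eirr ?Eua ?Eub ?Eab ?Eux1 ?Eux2 ?Eax1 ?Eax3 ?Ebx2 ?Ebx3 ?Ex12 ?Ex13 ?Ex23
  ?Nux3 ?Nax2 ?Nbx1 //;
rewrite esym ?Eua ?Eub ?Eab ?Eux1 ?Eux2 ?Eax1 ?Eax3 ?Ebx2 ?Ebx3 ?Ex12 ?Ex13 ?Ex23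
  ?Nux3 ?Nax2 ?Nbx1 //.
Qed.
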